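(* Let $\lambda$ be a partition with at most $n$ parts. Let $s+1$ be the number of distinct values in $\lambda$ after padding with zeros to length $n$ (equivalently, $s$ is the largest part of the reduction $\nu$ of $\lambda$). Then the moment variety $\mathcal{M}_{n,\lambda}=\mathcal{M}_{n,\nu}$ has dimension $(n-1)s$.
   Context: Work over $\mathbb{C}$. For a partition $\lambda$ of $d$ with at most $n$ parts, $N_\lambda$ is the set of index vectors $(i_1,\ldots,i_n)\in\mathbb{Z}_{\ge0}^n$ whose multiset of nonzero entries equals $\lambda$. The variety $\mathcal{M}_{n,\lambda}\subset\mathbb{P}^{|N_\lambda|-1}$ is the Zariski closure of the image of $(\mu_{ki})\mapsto(\mu_{1i_1}\cdots\mu_{ni_n})_{(i_1,\ldots,i_n)\in N_\lambda}$, with $\mu_{k0}=1$. Reduction: if the distinct values of the zero-padded $\lambda$ have multiplicities $k_0\ge\cdots\ge k_s$, the reduction is $\nu=(s^{k_s},(s-1)^{k_{s-1}},\ldots,1^{k_1},0^{k_0})$. The variety $\mathcal{M}_{n,\nu}$ is defined in the same way, and it is identified with $\mathcal{M}_{n,\lambda}$ by relabeling the index values. *)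

(* Defs.v *)
From mathcomp Require Import all_boot all_algebra.
From mathcomp Require Import Rstruct.
From mathcomp.real_closed Require Import complex.
From mathcomp Require Import mpoly.
Import GRing.Theory.
Local Open Scope ring_scope.

Set Implicit Arguments.
Unset Strict Implicit.
Unset Printing Implicit Defensive.

Definition CC : closedFieldType := (Rdefinitions.R[i])%type.

Definition is_partition_atmost (n : nat) (lam : seq nat) : Prop :=
  [/\ sorted geq lam, all (fun x => 0 < x)%N lam & (size lam <= n)%N].

Definition in_N (n : nat) (lam : seq nat) (i : n.-tuple nat) : bool :=
  perm_eq [seq x <- (i : seq nat) | (0 < x)%N] lam.

(* The monomial mu_{1 i_1} ... mu_{n i_n}, with the convention mu_{k0} = 1.
   The parameters are mu : 'I_n -> nat -> CC, mu k j = mu_{(k+1) j}. *)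
Definition moment_monomial (n : nat) (i : n.-tuple nat)
    (mu : 'I_n -> nat -> CC) : CC :=
  \prod_(k < n) (if tnth i k == 0%N then 1 else mu k (tnth i k)).

(* The coordinates a_1,...,a_m (elements of N_lambda) are algebraically
   dependent on the affine cone over M_{n,lambda}, i.e. some nonzero
   polynomial in the m coordinates lies in the vanishing ideal of the
   affine cone { c * (mu-monomials) } (whose Zariski closure is the affine
   cone over the Zariski closure M_{n,lambda} of the image). *)
Definition coords_dependent (n : nat) (m : nat)
    (a : 'I_m -> n.-tuple nat) : Prop :=
  exists P : {mpoly CC[m]}, P != 0 /\
    forall (c : CC) (mu : 'I_n -> nat -> CC),
      P.@[fun j => c * moment_monomial (a j) mu] = 0.

Definition indep_coords (n : nat) (lam : seq nat) (m : nat) : Prop :=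
  exists a : 'I_m -> n.-tuple nat,
    [/\ injective a, forall j, in_N lam (a j) & ~ coords_dependent a].

(* Dimension of the projective variety M_{n,lambda}: the transcendence
   degree of (the fraction field of) its homogeneous coordinate ring,
   i.e. the dimension of its affine cone, minus one.  The transcendence
   degree is the maximal number of algebraically independent coordinate
   functions. *)
Definition moment_variety_dim_is (n : nat) (lam : seq nat) (D : nat) : Prop :=
  indep_coords n lam D.+1 /\
  forall m, indep_coords n lam m -> (m <= D.+1)%N.

Definition pad (n : nat) (lam : seq nat) : seq nat :=
  lam ++ nseq (n - size lam) 0%N.

Definition reduction_s (n : nat) (lam : seq nat) : nat :=
  (size (undup (pad n lam))).-1.

(* Main.v *)
Set Warnings "-all".
Require Import Defs.
From mathcomp Require Import all_boot all_algebra.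
From mathcomp Require Import Rstruct.
From mathcomp.real_closed Require Import complex.
From mathcomp Require Import mpoly.
From mathcomp Require Import fingroup perm.
From mathcomp Require Import zify ring.
Import GRing.Theory Num.Theory.
Local Open Scope ring_scope.
Set Implicit Arguments.
Unset Strict Implicit.
Unset Printing Implicit Defensive.
Lemma poly_nonroot (q : {poly CC}) : q != 0 -> exists t : CC, q.[t] != 0.
Proof.
move=> q0.
pose rs := [seq (k%:R : CC) | k <- iota 0 (size q)].
have [/hasP[t _ ht]|/hasPn H] := boolP (has (fun t => q.[t] != 0) rs).
  by exists t.
have : (size rs < size q)%N.
  apply: max_poly_roots q0 _ _.
    by apply/allP=> t /H; rewrite negbK.
  rewrite map_inj_uniq ?iota_uniq // => a b /eqP.
  by rewrite (@eqr_nat (complex Rdefinitions.R)) => /eqP.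
by rewrite size_map size_iota ltnn.
Qed.

Lemma digits_inj (B N : nat) (m1 m2 : 'I_N -> nat) :
  (forall i, m1 i < B)%N -> (forall i, m2 i < B)%N ->
  (\sum_(i < N) m1 i * B ^ i = \sum_(i < N) m2 i * B ^ i)%N -> m1 =1 m2.
Proof.
elim: N m1 m2 => [|N IH] m1 m2 h1 h2; first by move=> _ [].
rewrite !big_ord_recl /= !expn0 !muln1.
under eq_bigr do rewrite expnS mulnCA.
under [X in _ = (_ + X)%N]eq_bigr do rewrite expnS mulnCA.
rewrite -!big_distrr /= => E.
have Bp : (0 < B)%N by apply: leq_ltn_trans (h1 ord0).
have e0 : m1 ord0 = m2 ord0.
  move: (congr1 (modn^~ B) E); rewrite ![(_ + B * _)%N]addnC.
  by rewrite ![(B * _)%N]mulnC !modnMDl !modn_small.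
have eS : forall i, m1 (lift ord0 i) = m2 (lift ord0 i).
  apply: IH => [i|i|]; [exact: h1|exact: h2|].
  move: (congr1 (divn^~ B) E); rewrite ![(_ + B * _)%N]addnC.
  by rewrite ![(B * _)%N]mulnC !divnMDl // !divn_small // !addn0.
by move=> i; case: (unliftP ord0 i) => [j ->|->].
Qed.

Lemma mpoly_nonzero_point N (P : {mpoly CC[N]}) : P != 0 ->
  exists y : 'I_N -> CC, (forall i, y i != 0) /\ P.@[y] != 0.
Proof.
move=> P0.
pose B := msize P.
pose e (m : 'X_{1..N}) := (\sum_(i < N) m i * B ^ i)%N.
have bnd m i : m \in msupp P -> (m i < B)%N.
  move=> /msize_mdeg_lt; apply: leq_ltn_trans.
  by rewrite mdegE (bigD1 i) //= leq_addr.
have einj : {in msupp P &, injective e}.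
  move=> m1 m2 h1 h2 E; apply/mnmP.
  by apply: (digits_inj (B := B)) => // i; apply: bnd.
pose q : {poly CC} := \sum_(m <- msupp P) P@_m *: 'X^(e m).
have qE t : q.[t] = P.@[fun i => t ^+ (B ^ i)].
  rewrite mevalE /q horner_sum; apply: eq_bigr => m _.
  rewrite hornerZ hornerXn; congr (_ * _).
  under eq_bigr do rewrite -exprM mulnC.
  by rewrite prodrXr.
have q0 : q != 0.
  have [m0 m0P] : exists m0, m0 \in msupp P.
    case E: (msupp P) => [|m0 s]; last by exists m0; rewrite in_cons eqxx.
    by move: P0; rewrite (mpolyE P) E big_nil eqxx.
  apply/eqP => /(congr1 (fun r : {poly CC} => r`_(e m0))).
  rewrite coef0 /q coef_sum (bigD1_seq m0) ?msupp_uniq //= coefZ coefXn eqxx mulr1.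
  rewrite big1_seq ?addr0 => [/eqP|m /andP[mm0 mP]].
    by apply/negP; rewrite -mcoeff_msupp m0P.
  rewrite coefZ coefXn; case: eqP => [/einj|]; last by rewrite mulr0.
  by move=> /(_ m0P mP) /eqP; rewrite eq_sym (negbTE mm0).
have [t] : exists t : CC, (q * 'X).[t] != 0.
  by apply: poly_nonroot; rewrite mulf_neq0 ?polyX_eq0.
rewrite hornerM hornerX mulf_eq0 negb_or => /andP[qt t0].
exists (fun i => t ^+ (B ^ i)); split; first by move=> i; rewrite expf_neq0.
by rewrite -qE.
Qed.
Lemma lin_dep (T : finType) m (F : 'I_m -> T -> int) : (#|T| < m)%N ->
  exists z : 'I_m -> int, (exists j, z j != 0) /\
    forall t, \sum_(j < m) z j * F j t = 0.
Proof.
move=> Tm.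
pose A : 'M[rat]_(m, #|T|) := \matrix_(j, l) (F j (enum_val l))%:~R.
have : kermx A != 0.
  rewrite kermx_eq0 -row_leq_rank -ltnNge.
  by apply: leq_ltn_trans (rank_leq_col A) Tm.
move=> /rowV0Pn[v /sub_kermxP vA v0].
pose r j := v 0 j.
have rF t : \sum_(j < m) r j * (F j t)%:~R = 0.
  have := congr1 (fun M : 'M_(1, #|T|) => M 0 (enum_rank t)) vA.
  rewrite !mxE /= => E; rewrite -[RHS]E.
  by apply: eq_bigr => j _; rewrite mxE enum_rankK.
pose z j := numq (r j) * \prod_(k < m | k != j) denq (r k).
pose d := \prod_(k < m) denq (r k).
have zE j : (z j)%:~R = r j * d%:~R :> rat.
  rewrite /z /d [X in _ = _ * X%:~R](bigD1 j) //= (intrM _ (numq (r j))).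
  rewrite (intrM _ (denq (r j))) mulrA; congr (_ * _).
  by rewrite -[X in _ = X * _]divq_num_den mulfVK // intq_eq0 denq_neq0.
have d0 : d != 0 by rewrite prodf_seq_neq0; apply/allP => k _; rewrite denq_neq0.
exists z; split.
  have [j vj] : exists j, v 0 j != 0.
    apply/existsP; move: v0; apply: contraR => /existsPn H.
    by apply/eqP/rowP => j; rewrite mxE; apply/eqP; move: (H j); rewrite negbK.
  exists j; rewrite -(intq_eq0) zE mulf_neq0 //.
  by rewrite intq_eq0.
move=> t; apply/eqP; rewrite -intq_eq0 rmorph_sum /=.
rewrite (eq_bigr (fun j => r j * (F j t)%:~R * d%:~R)) => [|j _].
  by rewrite -mulr_suml rF mul0r.
by rewrite intrM zE mulrAC.
Qed.
Definition zpos (z : int) : nat := if (0 <= z)%R then absz z else 0%N.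
Definition zneg (z : int) : nat := if (0 <= z)%R then 0%N else absz z.

Lemma zposneg z : (zpos z)%:Z - (zneg z)%:Z = z.
Proof.
rewrite /zpos /zneg; case: ifP => h; first by rewrite subr0 gez0_abs.
by rewrite sub0r ltz0_abs ?opprK // real_ltNge ?num_real // h.
Qed.

Lemma Posz_sum (I : Type) (r : seq I) (F : I -> nat) :
  Posz (\sum_(i <- r) F i)%N = \sum_(i <- r) (F i)%:Z.
Proof. by rewrite (big_morph Posz PoszD (erefl (Posz 0))). Qed.

Lemma int_rel_nat m (z : 'I_m -> int) (b : 'I_m -> nat) :
  \sum_(j < m) z j * (b j)%:Z = 0 ->
  (\sum_(j < m) zpos (z j) * b j = \sum_(j < m) zneg (z j) * b j)%N.
Proof.
move=> H; apply/eqP; rewrite -eqz_nat !Posz_sum -subr_eq0 -sumrB; apply/eqP.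
rewrite -[RHS]H; apply: eq_bigr => j _; by rewrite !PoszM -mulrBl zposneg.
Qed.

Lemma group_prod m (g : 'I_m -> nat) (al be : 'I_m -> nat) (f : nat -> CC) :
  (forall v, \sum_(j < m) al j * (g j == v) = \sum_(j < m) be j * (g j == v))%N ->
  \prod_(j < m) f (g j) ^+ al j = \prod_(j < m) f (g j) ^+ be j.
Proof.
move=> H.
pose M := (\max_(j < m) g j).+1.
have gM j : (g j < M)%N by rewrite ltnS (leq_bigmax j).
have E e : \prod_(j < m) f (g j) ^+ e j =
    \prod_(v < M) f v ^+ (\sum_(j < m) e j * (g j == v))%N.
  under [RHS]eq_bigr do rewrite -prodrXr.
  rewrite exchange_big /=; apply: eq_bigr => j _.
  rewrite (bigD1 (Ordinal (gM j))) //= eqxx muln1 big1 ?mulr1 // => v.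
  rewrite -val_eqE /= => /negbTE; rewrite eq_sym => ->.
  by rewrite muln0 expr0.
by rewrite !E; apply: eq_bigr => v _; rewrite H.
Qed.

Lemma binom_dep n m (a : 'I_m -> n.-tuple nat) (z : 'I_m -> int) :
  (exists j, z j != 0) ->
  \sum_(j < m) z j = 0 ->
  (forall (k : 'I_n) (v : nat),
     \sum_(j < m) z j * ((tnth (a j) k == v) : nat)%:Z = 0) ->
  coords_dependent a.
Proof.
move=> [j0 zj0] zsum zrel.
pose mA := [multinom zpos (z j) | j < m].
pose mB := [multinom zneg (z j) | j < m].
exists ('X_[mA] - 'X_[mB]); split.
  rewrite subr_eq0; apply/eqP => /(congr1 (mcoeff mA)).
  rewrite !mcoeffX eqxx; case: eqP => [E|_]; last by move/eqP; rewrite oner_eq0.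
  move: (congr1 (fun mm : 'X_{1..m} => mm j0) E); rewrite !mnmE /zpos /zneg.
  case: ifP => _ /eqP; rewrite ?absz_eq0 ?(negbTE zj0) //.
  by rewrite eq_sym absz_eq0 (negbTE zj0).
move=> c mu; rewrite mevalB !mevalX; apply/eqP; rewrite subr_eq0; apply/eqP.
pose h k v : CC := if v == 0%N then 1 else mu k v.
have split e : \prod_(j < m) (c * moment_monomial (a j) mu) ^+ e j =
    c ^+ (\sum_(j < m) e j)%N *
    \prod_(k < n) \prod_(j < m) h k (tnth (a j) k) ^+ e j.
  rewrite -prodrXr [X in _ = _ * X]exchange_big -big_split /=.
  by apply: eq_bigr => j _; rewrite exprMn /moment_monomial prodrXl.
under eq_bigr do rewrite mnmE.
under [in RHS]eq_bigr do rewrite mnmE.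
rewrite !split; congr (_ * _).
  congr (c ^+ _); have := (@int_rel_nat m z (fun _ => 1%N)).
  under eq_bigr do rewrite mulr1.
  have s1 (F : 'I_m -> nat) : (\sum_(j < m) F j * 1 = \sum_(j < m) F j)%N.
    by apply: eq_bigr => j _; rewrite muln1.
  by rewrite !s1 => /(_ zsum).
apply: eq_bigr => k _; apply: group_prod => v.
exact: int_rel_nat (zrel k v).
Qed.
Lemma indep_from_surj n lam (T : finType) (a' : T -> n.-tuple nat) :
  (forall t, in_N lam (a' t)) ->
  (forall y : T -> CC, (forall t, y t != 0) ->
     exists c mu, forall t, c * moment_monomial (a' t) mu = y t) ->
  indep_coords n lam #|T|.
Proof.
move=> aN surj.
have ainj : injective a'.
  move=> t1 t2 E; apply/eqP; apply/negP => /negP t12.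
  have [|c [mu H]] := surj (fun t => if t == t1 then 2 else 1).
    move=> t; case: (t == t1); last exact: oner_neq0.
    by rewrite (@pnatr_eq0 (complex Rdefinitions.R)).
  move: (H t1) (H t2); rewrite E eqxx eq_sym (negbTE t12) => -> /eqP.
  by rewrite -subr_eq0 -[2]/(1 + 1) addrK oner_eq0.
exists (fun j => a' (enum_val j)); split => //.
  by move=> j1 j2 /ainj /enum_val_inj.
move=> [P [P0 HP]].
have [y [y0 Py]] := mpoly_nonzero_point P0.
have [c [mu H]] := surj (fun t => y (enum_rank t)) (fun t => y0 _).
move: (HP c mu); apply/eqP; move: Py; apply: contra => /eqP <-.
by apply/eqP/meval_eq => j; rewrite H enum_valK.
Qed.
Definition wv n lam := nth 0%N (pad n lam) n.-1.
Definition Vp n lam := [seq v <- undup (pad n lam) | v != wv n lam].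

Lemma size_pad n lam : (size lam <= n)%N -> size (pad n lam) = n.
Proof. by move=> h; rewrite /pad size_cat size_nseq subnKC. Qed.

Lemma pad0_w n lam : all (fun x => 0 < x)%N lam -> (size lam <= n)%N ->
  0%N \in pad n lam -> wv n lam = 0%N.
Proof.
move=> lpos ln; rewrite /pad mem_cat => /orP[/(allP lpos)//|].
rewrite mem_nseq => /andP[h _]; rewrite /wv /pad nth_cat nth_nseq.
case: ifP => [|_]; last by case: ifP.
by move=> h2; exfalso; lia.
Qed.

Lemma size_Vp n lam : (size lam <= n)%N ->
  size (Vp n lam) = reduction_s n lam.
Proof.
move=> ln; rewrite /Vp /reduction_s size_filter.
case: n ln => [|n] ln.
  by move: ln; rewrite leqn0 => /nilP ->.
have wp : wv n.+1 lam \in undup (pad n.+1 lam).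
  by rewrite mem_undup /wv mem_nth // size_pad.
have := count_predC (pred1 (wv n.+1 lam)) (undup (pad n.+1 lam)).
rewrite count_uniq_mem ?undup_uniq // wp add1n => <- /=.
by apply: eq_count => x /=.
Qed.

Lemma uniq_Vp n lam : uniq (Vp n lam).
Proof. by rewrite filter_uniq ?undup_uniq. Qed.

Lemma mem_Vp n lam v : (v \in Vp n lam) = (v \in pad n lam) && (v != wv n lam).
Proof. by rewrite mem_filter mem_undup andbC. Qed.

Lemma Vp_neq0 n lam v : all (fun x => 0 < x)%N lam -> (size lam <= n)%N ->
  v \in Vp n lam -> v != 0%N.
Proof.
move=> lpos ln; rewrite mem_Vp => /andP[vp vw]; apply/eqP => v0.
by move: vw vp; rewrite v0 => /eqP vw /(pad0_w lpos ln) /esym.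
Qed.

Lemma perm_N n lam (t : n.-tuple nat) :
  all (fun x => 0 < x)%N lam -> (size lam <= n)%N ->
  in_N lam t = perm_eq t (pad n lam).
Proof.
move=> lpos ln; apply/idP/idP => [tN|tp].
  rewrite -(perm_filterC (fun x => 0 < x)%N t) /pad.
  apply: perm_cat => //.
  set f := filter _ _.
  have : all (pred1 0%N) f by apply/allP => x; rewrite mem_filter /= lt0n negbK => /andP[].
  move/all_pred1P => ->.
  suff -> : size f = (n - size lam)%N by [].
  have h1 := count_predC (fun x => 0 < x)%N t.
  have h2 := perm_size tN; rewrite size_filter in h2.
  rewrite size_tuple in h1.
  by rewrite /f size_filter; apply/eqP; rewrite -(eqn_add2l (size lam)) subnKC // -{1}h2 h1.
rewrite /in_N; apply: perm_trans (perm_filter _ tp) _; rewrite /pad filter_cat.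
have -> : [seq x <- nseq (n - size lam) 0%N | (0 < x)%N] = [::].
  by rewrite filter_nseq.
by rewrite cats0 (all_filterP lpos).
Qed.

Lemma sum_count (T : eqType) (r : seq T) x :
  (\sum_(y <- r) (y == x))%N = count_mem x r.
Proof. by elim: r => [|y r IH]; rewrite ?big_nil ?big_cons //= IH. Qed.

Lemma sum_nth_count (r : seq nat) x :
  (\sum_(l < size r) (nth 0%N r l == x))%N = count_mem x r.
Proof. by rewrite -sum_count (big_nth 0%N) big_mkord. Qed.

Lemma sum_tnth_count n (t : n.-tuple nat) x :
  (\sum_(k < n) (tnth t k == x))%N = count_mem x t.
Proof. by rewrite -sum_count big_tuple. Qed.
Lemma full_rel n lam m (a : 'I_m -> n.-tuple nat) (z : 'I_m -> int) :
  (forall j, perm_eq (a j) (pad n lam)) ->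
  \sum_(j < m) z j = 0 ->
  (forall (k : 'I_n) (l : nat), (k < n.-1)%N -> (l < size (Vp n lam))%N ->
     \sum_(j < m) z j * ((tnth (a j) k == nth 0%N (Vp n lam) l) : nat)%:Z = 0) ->
  forall (k : 'I_n) (v : nat),
    \sum_(j < m) z j * ((tnth (a j) k == v) : nat)%:Z = 0.
Proof.
move=> aP zsum H.
set p := pad n lam; set w := wv n lam; set V := Vp n lam.
have inp j k : tnth (a j) k \in p by rewrite -(perm_mem (aP j)) mem_tnth.
have step1 (k : 'I_n) : (k < n.-1)%N -> forall v,
    \sum_(j < m) z j * ((tnth (a j) k == v) : nat)%:Z = 0.
  move=> kn v.
  case: (boolP (v \in p)) => vp; last first.
    apply: big1 => j _; case: eqP => [E|]; last by rewrite mulr0.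
    by move: (inp j k); rewrite E (negbTE vp).
  case: (eqVneq v w) => [->|vw]; last first.
    have vV : v \in V by rewrite mem_Vp vp vw.
    by have := H k (index v V) kn; rewrite index_mem vV nth_index //; apply.
  have E j : ((tnth (a j) k == w) : nat)%:Z =
      1 - \sum_(l < size V) ((tnth (a j) k == nth 0%N V l) : nat)%:Z.
    have : (\sum_(l < size V) (tnth (a j) k == nth 0%N V l))%N =
           (tnth (a j) k != w).
      under eq_bigr do rewrite eq_sym.
      by rewrite sum_nth_count count_uniq_mem ?uniq_Vp // mem_Vp inp.
    move/(congr1 Posz); rewrite Posz_sum => ->.
    by case: eqP.
  under eq_bigr do rewrite E mulrBr mulr1 mulr_sumr.
  rewrite sumrB zsum sub0r exchange_big /= big1 ?oppr0 // => l _.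
  exact: H.
move=> k v.
case: (ltnP k n.-1) => kn; first exact: step1.
have E j : ((tnth (a j) k == v) : nat)%:Z =
    (count_mem v p)%:Z - \sum_(k' < n | k' != k) ((tnth (a j) k' == v) : nat)%:Z.
  have := sum_tnth_count (a j) v.
  rewrite (seq.permP (aP j)) (bigD1 k) //= => /(congr1 Posz).
  rewrite PoszD => <-.
  by rewrite (big_morph Posz PoszD (erefl (Posz 0))) addrK.
under eq_bigr do rewrite E mulrBr mulr_sumr.
rewrite sumrB -mulr_suml zsum mul0r sub0r exchange_big /= big1 ?oppr0 // => k' k'k.
apply: step1.
have /eqP : val k' != val k by [].
move: kn; clear E; case: k k'k => [x hx] /= _ /=; case: k' => [y hy] /=; lia.
Qed.
Lemma upper n lam m : all (fun x => 0 < x)%N lam -> (size lam <= n)%N ->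
  indep_coords n lam m -> (m <= (n.-1 * reduction_s n lam).+1)%N.
Proof.
move=> lpos ln [a [_ aN ndep]].
rewrite leqNgt; apply/negP => lt; apply: ndep.
set s := reduction_s n lam.
have aP j : perm_eq (a j) (pad n lam) by rewrite -perm_N.
pose T : finType := (option ('I_n.-1 * 'I_s))%type.
have cardT : #|T| = (n.-1 * s).+1 by rewrite card_option card_prod !card_ord.
pose F j (t : T) : int := match t with
  | None => 1
  | Some (k, l) => ((tnth (a j) (widen_ord (leq_pred n) k)
                       == nth 0%N (Vp n lam) l) : nat)%:Z end.
have Tm : (#|T| < m)%N by rewrite cardT.
have [z [nz zrel]] := @lin_dep T m F Tm.
have zsum : \sum_(j < m) z j = 0.
  by have := zrel None; under eq_bigr do rewrite /F mulr1.
apply: (binom_dep nz zsum).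
apply: full_rel aP zsum _ => k l kn ls.
rewrite size_Vp // in ls.
have -> : k = widen_ord (leq_pred n) (Ordinal kn) by apply: val_inj.
exact: (zrel (Some (Ordinal kn, Ordinal ls))).
Qed.
Lemma prod_helper n (f g : 'I_n -> CC) (S : seq 'I_n) : uniq S ->
  (forall x, x \notin S -> f x = g x) ->
  \prod_x f x * \prod_(x <- S) g x = \prod_x g x * \prod_(x <- S) f x.
Proof.
move=> uS fg; rewrite (big_uniq S uS) (big_uniq S uS).
rewrite [X in X * _ = _](bigID (fun x => x \in S)) [X in _ = X * _](bigID (fun x => x \in S)) /=.
rewrite [X in _ * X * _](eq_bigr g) => [|x /fg //].
by ring.
Qed.

Definition ptp n lam (s : {perm 'I_n}) : n.-tuple nat :=
  [tuple nth 0%N (pad n lam) (s x) | x < n].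

Lemma ptp_perm n lam (s : {perm 'I_n}) : (size lam <= n)%N ->
  perm_eq (ptp lam s) (pad n lam).
Proof.
move=> ln; rewrite /ptp /=.
have -> : [seq nth 0%N (pad n lam) (s x) | x <- enum 'I_n] =
          map (fun x : 'I_n => nth 0%N (pad n lam) x) (map s (enum 'I_n)).
  by elim: (enum 'I_n) => //= x e ->.
have E : map (fun x : 'I_n => nth 0%N (pad n lam) x) (enum 'I_n) = pad n lam.
  rewrite -[RHS](mkseq_nth 0%N) size_pad // /mkseq -val_enum_ord.
  by elim: (enum 'I_n) => //= x e ->.
rewrite -[X in perm_eq _ X]E; apply: perm_map.
apply: uniq_perm.
- by rewrite map_inj_uniq ?enum_uniq //; exact: perm_inj.
- exact: enum_uniq.
by move=> x; rewrite mem_enum; apply/mapP; exists (s^-1 x)%g; rewrite ?mem_enum ?permKV.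
Qed.

Lemma lastpos_lt n (k : 'I_n.-1) : (n.-1 < n)%N.
Proof. by case: k => k /=; case: n => // n; rewrite ltnSn. Qed.
Lemma solve1 (F G y0 Y : CC) : G != 0 -> y0 != 0 -> Y != 0 ->
  F * (y0 / Y) = G -> y0 / G * F = Y.
Proof.
move=> Gn yn Yn E; rewrite -E.
have Fn : F != 0 by apply: contraNneq Gn => F0; rewrite -E F0 mul0r.
by field; rewrite Fn yn Yn.
Qed.

Lemma solve2 (F G y0 Y A : CC) : G != 0 -> y0 != 0 -> A != 0 ->
  F * A = G * (Y * A / y0) -> y0 / G * F = Y.
Proof.
move=> Gn yn An E.
have -> : F = G * Y / y0.
  by apply: (mulIf An); rewrite E; field; exact: yn.
by field; rewrite yn Gn.
Qed.

Lemma lower n lam : all (fun x => 0 < x)%N lam -> (size lam <= n)%N ->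
  indep_coords n lam (n.-1 * reduction_s n lam).+1.
Proof.
move=> lpos ln.
set s := reduction_s n lam.
set p := pad n lam; set w := wv n lam; set V := Vp n lam.
have sV : size V = s := size_Vp ln.
have sp : size p = n := size_pad ln.
pose T : finType := (option ('I_n.-1 * 'I_s))%type.
have cardT : #|T| = (n.-1 * s).+1 by rewrite card_option card_prod !card_ord.
pose Kp (k : 'I_n.-1) : 'I_n := widen_ord (leq_pred n) k.
pose Lp (k : 'I_n.-1) : 'I_n := Ordinal (lastpos_lt k).
pose vv (l : 'I_s) := nth 0%N V l.
pose Qp k l : 'I_n := insubd (Kp k) (index (vv l) p).
pose sig (t : T) : {perm 'I_n} := match t with
  | None => 1%g
  | Some (k, l) => if nth 0%N p (Kp k) == vv l then tperm (Kp k) (Lp k)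
                   else (tperm (Kp k) (Qp k l) * tperm (Kp k) (Lp k))%g end.
rewrite -cardT; apply: (@indep_from_surj n lam T (fun t => ptp lam (sig t))).
  by move=> t; rewrite perm_N // ptp_perm.
move=> y ynz.
pose y0 := y None.
pose Y (x l : nat) : CC :=
  match (insub x : option 'I_n.-1), (insub l : option 'I_s) with
  | Some x', Some l' => y (Some (x', l'))
  | _, _ => 1 end.
pose muD (x v : nat) : CC := y0 / Y x (index v V).
pose hD (x u : nat) : CC := if (u == 0%N) || (u == w) then 1 else muD x u.
pose pv (x : nat) := nth 0%N p x.
pose mu (x : 'I_n) (v : nat) : CC :=
  if (v == w) || (n.-1 <= x)%N then 1
  else if v == pv x then muD x v
  else Y x (index v V) * hD x (pv x) * muD (index v p) v / y0.
pose h (x : 'I_n) (v : nat) : CC := if v == 0%N then 1 else mu x v.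
pose G := \prod_(x < n) h x (pv x).
exists (y0 / G), mu.
have y0nz : y0 != 0 := ynz None.
have Ynz x l : Y x l != 0.
  rewrite /Y; case: (insub x : option 'I_n.-1) => [x'|];
  case: (insub l : option 'I_s) => [l'|] //=; by rewrite ?oner_neq0 ?ynz.
have muDnz x v : muD x v != 0 by rewrite mulf_neq0 ?invr_neq0.
have hDnz x u : hD x u != 0 by rewrite /hD; case: ifP; rewrite ?oner_neq0.
have hnz x v : h x v != 0.
  rewrite /h /mu; case: ifP => _; rewrite ?oner_neq0 //.
  case: ifP => _; rewrite ?oner_neq0 //.
  case: ifP => _ //; by rewrite !mulf_neq0 ?invr_neq0.
have Gnz : G != 0 by rewrite prodf_seq_neq0; apply/allP => x _; exact: hnz.
have mono t : moment_monomial (ptp lam (sig t)) mu =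
              \prod_(x < n) h x (pv (sig t x)).
  by apply: eq_bigr => x _; rewrite tnth_mktuple.
case => [[k l]|]; last first.
  rewrite mono; under eq_bigr do rewrite perm1.
  by rewrite divfK.
rewrite mono /=.
set K := Kp k; set L := Lp k; set v := vv l; set Q := Qp k l.
have hK : (val K < n.-1)%N by rewrite /= ltn_ord.
have hL : val L = n.-1 by [].
have pL : pv L = w by [].
have lV : (l < size V)%N by rewrite sV ltn_ord.
have vV : v \in V by rewrite /v /vv mem_nth.
have vp : v \in p by move: vV; rewrite mem_Vp => /andP[].
have vw : v != w by move: vV; rewrite mem_Vp => /andP[].
have v0 : v != 0%N by apply: (Vp_neq0 lpos ln vV).
have KL : K != L by rewrite -val_eqE hL /= neq_ltn ltn_ord.
have hw x : h x w = 1 by rewrite /h /mu eqxx /=; case: ifP.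
have hlast v' : h L v' = 1 by rewrite /h /mu hL leqnn orbT; case: ifP.
have Yk : Y K (index v V) = y (Some (k, l)).
  rewrite /v /vv index_uniq ?uniq_Vp // /Y.
  have -> : (insub (val K) : option 'I_n.-1) = Some k by rewrite /= valK.
  by rewrite valK.
have pvp (x : 'I_n) : pv x \in p by rewrite /pv mem_nth // sp.
have hdiag (x : 'I_n) : (x < n.-1)%N -> pv x != w -> h x (pv x) = muD x (pv x).
  move=> xn xw.
  have xV : pv x \in V by rewrite mem_Vp pvp xw.
  rewrite /h (negbTE (Vp_neq0 lpos ln xV)) /mu (negbTE xw) /= leqNgt xn /=.
  by rewrite eqxx.
have hDeq (x : 'I_n) : (x < n.-1)%N -> hD x (pv x) = h x (pv x).
  move=> xn; rewrite /hD; case: eqP => [->|p0] /=; first by rewrite /h eqxx.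
  case: eqP => [->|pw]; first by rewrite hw.
  by rewrite hdiag //; apply/eqP.
case: ifP => pK.
  have pK' : pv K = v by apply/eqP: pK.
  have uS : uniq [:: K; L] by rewrite /= inE KL.
  have nS : forall x, x \notin [:: K; L] -> h x (pv (tperm K L x)) = h x (pv x).
    move=> x; rewrite !inE negb_or => /andP[xK xL].
    by rewrite tpermD // eq_sym.
  have := @prod_helper n (fun x => h x (pv (tperm K L x))) (fun x => h x (pv x))
    [:: K; L] uS nS.
  rewrite !big_cons !big_nil /= tpermL tpermR pL hw !hlast !mulr1.
  rewrite hdiag //; last by rewrite pK'.
  rewrite /muD pK' Yk -/G (hw K) mulr1 => E.
  by apply: solve1 => //; exact: ynz.
have pK' : pv K != v by rewrite /pv /= pK.
have iv : (index v p < n)%N by rewrite -sp index_mem.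
have hQv : val Q = index v p by rewrite /Q /Qp val_insubd iv.
have pQ : pv Q = v by rewrite /pv hQv nth_index.
have KQ : K != Q by apply: (contraNneq _ pK') => ->; rewrite pQ.
have QL : Q != L by apply: (contraNneq _ vw) => E; rewrite -pQ E pL.
have hQ : (val Q < n.-1)%N.
  have /eqP : val Q != val L by [].
  rewrite hL; have : (val Q < n)%N := ltn_ord Q; move: (val Q) => q; lia.
have uS : uniq [:: K; Q; L] by rewrite /= !inE negb_or KL KQ QL.
have sK : (tperm K Q * tperm K L)%g K = Q.
  by rewrite permM tpermL (@tpermD _ K L Q) // eq_sym.
have sQ : (tperm K Q * tperm K L)%g Q = L by rewrite permM tpermR tpermL.
have sL : (tperm K Q * tperm K L)%g L = K.
  by rewrite permM (@tpermD _ K Q L KL QL) tpermR.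
have nS : forall x, x \notin [:: K; Q; L] ->
    h x (pv ((tperm K Q * tperm K L)%g x)) = h x (pv x).
  move=> x; rewrite !inE !negb_or => /andP[xK /andP[xQ xL]].
  by rewrite permM !tpermD // eq_sym.
have := @prod_helper n (fun x => h x (pv ((tperm K Q * tperm K L)%g x)))
  (fun x => h x (pv x)) [:: K; Q; L] uS nS.
rewrite !big_cons !big_nil /= sK sQ sL pQ pL (hw Q) !hlast !mulr1 -/G.
have -> : h K v = Y K (index v V) * h K (pv K) * h Q v / y0.
  rewrite {1}/h (negbTE v0) /mu (negbTE vw) /= leqNgt hK /= eq_sym (negbTE pK').
  have hQe : h Q v = muD (index v p) v by rewrite -{1}pQ hdiag ?pQ // hQv.
  by rewrite (hDeq K hK) hQe.
rewrite Yk => E.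
apply: (solve2 (A := h K (pv K) * h Q v)) => //; first by rewrite mulf_neq0.
by rewrite E; congr (_ * _); rewrite !mulrA.
Qed.

Theorem theorem4p4 (n : nat) (lam : seq nat) :
  is_partition_atmost n lam ->
  moment_variety_dim_is n lam ((n - 1) * reduction_s n lam)%N.
Proof.
move=> [_ lpos ln]; rewrite subn1; split; first exact: lower.
by move=> m; apply: upper.
Qed.
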